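(* Let $G$ be obtained from a graph $H_0$ by subdividing every edge exactly once. Then $\chi_\ell^{\bullet}(G)\le\chi_c^{\bullet}(G)\leq 3$, $\chi_c^{\star}(G)\leq 4$ and $\chi_\ell^{\star}(G)\leq 3$. All of these bounds are attained (by even cycles).
   Context: All graphs are finite and simple. A correspondence-cover of a graph $G$ is a pair $(L,H)$ where $H$ is a graph and $L$ maps each $v\in V(G)$ to a subset $L(v)\subseteq V(H)$ such that: the sets $L(v)$ partition $V(H)$; each $L(v)$ induces a clique in $H$; if $uv\notin E(G)$ there are no edges of $H$ between $L(u)$ and $L(v)$; if $uv\in E(G)$ the edges of $H$ between $L(u)$ and $L(v)$ form a matching. It is $k$-fold if all $|L(v)|=k$. A list-cover is the cover arising from a list-assignment $v\mapsto L(v)\subseteq\mathbb{N}$: vertices $(v,x)$, $x\in L(v)$, cliques on lists, edges $(u,x)(v,x)$ for $uv\in E(G)$. An independent transversal is an independent set of $H$ with exactly one vertex in each $L(v)$. A $k$-fold cover has a packing if it has $k$ pairwise disjoint independent transversals, and a fractional packing if there is a probability distribution on independent transversals $I$ with $\Pr(x\in I)=1/|L(v)|$ for all $v$, $x\in L(v)$. $\chi_c^\star(G)$ (resp. $\chi_c^\bullet(G)$) is the least $k$ such that every $k$-fold correspondence-cover has a packing (resp. fractional packing); $\chi_\ell^\star(G)$, $\chi_\ell^\bullet(G)$ are defined the same way using only $k$-fold list-covers. *)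

(* Defs.v *)
From HB Require Import structures.
From mathcomp Require Import all_boot all_order all_algebra.
From mathcomp Require Import Rstruct.
Set Implicit Arguments. Unset Strict Implicit. Unset Printing Implicit Defensive.
Import Order.TTheory GRing.Theory Num.Theory.

Definition simple_graph (V : finType) (g : rel V) : Prop :=
  symmetric g /\ irreflexive g.

(* (L, H) with H = (C, h) a graph on the finite type C. *)
Definition is_cover (V : finType) (g : rel V) (C : finType) (h : rel C)
    (L : V -> {set C}) : Prop :=
  [/\ simple_graph h,
      (forall c : C, #|[set v | c \in L v]| = 1%N),
      (forall v x y, x \in L v -> y \in L v -> x != y -> h x y),
      (forall u v x y, u != v -> ~~ g u v -> x \in L u -> y \in L v -> ~~ h x y)
    &
      (forall u v x y1 y2, g u v -> x \in L u -> y1 \in L v -> y2 \in L v ->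
          h x y1 -> h x y2 -> y1 = y2)].

Definition k_fold (V : finType) (C : finType) (L : V -> {set C}) (k : nat) : Prop :=
  forall v, #|L v| = k.

Definition indep_transversal (V : finType) (C : finType) (h : rel C)
    (L : V -> {set C}) (I : {set C}) : bool :=
  [forall x in I, forall y in I, ~~ h x y] && [forall v, #|I :&: L v| == 1%N].

Definition has_packing (V : finType) (C : finType) (h : rel C)
    (L : V -> {set C}) (k : nat) : Prop :=
  exists T : 'I_k -> {set C},
    (forall i, indep_transversal h L (T i)) /\
    (forall i j, i != j -> [disjoint T i & T j]).

Local Open Scope ring_scope.
Definition has_fractional_packing (V : finType) (C : finType) (h : rel C)
    (L : V -> {set C}) : Prop :=
  exists p : {set C} -> Rdefinitions.R,
    [/\ (forall I, 0 <= p I),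
        (forall I, ~~ indep_transversal h L I -> p I = 0),
        (\sum_(I : {set C}) p I = 1)
      & (forall v x, x \in L v ->
           \sum_(I : {set C} | x \in I) p I = (#|L v|%:R)^-1)].

Local Close Scope ring_scope.
(* A list assignment with values in 'I_N (any finite lists of naturals fit
   in some 'I_N).  The cover graph has vertices (v, x), x in Lst v. *)
Definition lc_vert (V : finType) (N : nat) (Lst : V -> {set 'I_N}) :=
  {p : V * 'I_N | p.2 \in Lst p.1}.

Definition lc_rel (V : finType) (g : rel V) (N : nat) (Lst : V -> {set 'I_N})
  : rel (lc_vert Lst) :=
  fun a b => (val a != val b) &&
    (((val a).1 == (val b).1) ||
     (g (val a).1 (val b).1 && ((val a).2 == (val b).2))).

Definition lc_L (V : finType) (N : nat) (Lst : V -> {set 'I_N})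
  : V -> {set lc_vert Lst} :=
  fun v => [set c | (val c).1 == v].
Arguments lc_rel {V} g {N} Lst.
Arguments lc_L {V N} Lst.

Definition corr_packing_prop (V : finType) (g : rel V) (k : nat) : Prop :=
  forall (C : finType) (h : rel C) (L : V -> {set C}),
    is_cover g h L -> k_fold L k -> has_packing h L k.

Definition corr_frac_prop (V : finType) (g : rel V) (k : nat) : Prop :=
  forall (C : finType) (h : rel C) (L : V -> {set C}),
    is_cover g h L -> k_fold L k -> has_fractional_packing h L.

Definition list_packing_prop (V : finType) (g : rel V) (k : nat) : Prop :=
  forall (N : nat) (Lst : V -> {set 'I_N}), (forall v, #|Lst v| = k) ->
    has_packing (lc_rel g Lst) (lc_L Lst) k.

Definition list_frac_prop (V : finType) (g : rel V) (k : nat) : Prop :=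
  forall (N : nat) (Lst : V -> {set 'I_N}), (forall v, #|Lst v| = k) ->
    has_fractional_packing (lc_rel g Lst) (lc_L Lst).

(* For a parameter chi := least k >= 1 with P k:
   chi_le P n  <->  chi <= n,
   chi_eq P n  <->  chi = n,
   chi_leq P Q <->  chi(P) <= chi(Q)  (whenever chi(Q) exists). *)
Definition chi_le (P : nat -> Prop) (n : nat) : Prop :=
  exists k, [/\ 0 < k, k <= n & P k]%N.

Definition chi_eq (P : nat -> Prop) (n : nat) : Prop :=
  chi_le P n /\ ~ chi_le P n.-1.

Definition chi_leq (P Q : nat -> Prop) : Prop :=
  forall k, (0 < k)%N -> Q k -> chi_le P k.

Definition subdiv_edge (V0 : finType) (e0 : rel V0) :=
  {S : {set V0} | [exists u, exists v, e0 u v && (S == [set u; v])]}.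

Definition subdiv_vert (V0 : finType) (e0 : rel V0) : finType :=
  (V0 + subdiv_edge e0)%type.

Definition subdiv_rel (V0 : finType) (e0 : rel V0) : rel (subdiv_vert e0) :=
  fun a b => match a, b with
             | inl x, inr s => x \in val s
             | inr s, inl x => x \in val s
             | _, _ => false
             end.

Definition cycle_rel (n : nat) : rel 'I_n :=
  fun i j => (j == (i.+1 %% n) :> nat) || (i == (j.+1 %% n) :> nat).
Arguments subdiv_rel {V0} e0.
Arguments subdiv_vert {V0} e0.
Arguments cycle_rel n : clear implicits.

(* Main.v *)
Require Import Defs.
From mathcomp Require Import all_boot all_order all_algebra all_fingroup.
From mathcomp Require Import Rstruct ring lra.
Set Implicit Arguments. Unset Strict Implicit. Unset Printing Implicit Defensive.
Import Order.TTheory GRing.Theory Num.Theory.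

Section Cover.
Variables (V : finType) (g : rel V) (C : finType) (h : rel C) (L : V -> {set C}).
Hypothesis Hc : is_cover g h L.

Lemma cover_part x v w : x \in L v -> x \in L w -> v = w.
Proof.
case: Hc => _ Hp _ _ _ xv xw.
have /eqP/cards1P [v0 Hv0] := Hp x.
have : v \in [set v | x \in L v] by rewrite inE.
have : w \in [set v | x \in L v] by rewrite inE.
by rewrite Hv0 !inE => /eqP -> /eqP ->.
Qed.

Lemma cover_irr x : ~~ h x x.
Proof. by case: Hc => [[_ Hi]] _ _ _ _; rewrite Hi. Qed.

Lemma cover_sym x y : h x y = h y x.
Proof. by case: Hc => [[Hs _]] _ _ _ _; rewrite Hs. Qed.

Lemma choice_trans (phi : V -> C) :
  (forall v, phi v \in L v) -> (forall v w, g v w -> ~~ h (phi v) (phi w)) ->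
  indep_transversal h L [set phi v | v : V].
Proof.
move=> HL Hind; apply/andP; split.
  apply/forallP => x; apply/implyP => /imsetP [v _ ->].
  apply/forallP => y; apply/implyP => /imsetP [w _ ->].
  have [->|nvw] := eqVneq v w; first exact: cover_irr.
  case gvw: (g v w); first exact: Hind.
  case: Hc => _ _ _ Hn _; apply: (Hn v w) => //; by rewrite gvw.
apply/forallP => v; apply/cards1P; exists (phi v).
apply/setP => y; rewrite !inE; apply/andP/eqP => [[/imsetP [w _ ->] Hw]|->].
  by rewrite (cover_part Hw (HL w)).
by split; [apply: imset_f | apply: HL].
Qed.

Lemma choice_packing k (phi : 'I_k -> V -> C) :
  (forall i v, phi i v \in L v) ->
  (forall i v w, g v w -> ~~ h (phi i v) (phi i w)) ->
  (forall i j v, phi i v = phi j v -> i = j) ->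
  has_packing h L k.
Proof.
move=> HL Hind Hinj; exists (fun i => [set phi i v | v : V]); split.
  move=> i; exact: (choice_trans (HL i) (Hind i)).
move=> i j nij; rewrite -setI_eq0; apply/eqP/setP => x; rewrite !inE.
apply/negP => /andP [/imsetP [v _ ->] /imsetP [w _ Hvw]].
have evw := cover_part (HL i v) (etrans (f_equal (fun z => z \in L w) Hvw) (HL j w)).
subst w; by rewrite (Hinj _ _ _ Hvw) eqxx in nij.
Qed.

Lemma trans_elem I v : indep_transversal h L I -> exists x, I :&: L v = [set x].
Proof. by case/andP => _ /forallP /(_ v) /cards1P. Qed.

Lemma packing_covers k (T : 'I_k -> {set C}) v x :
  #|L v| = k -> (forall i, indep_transversal h L (T i)) ->
  (forall i j, i != j -> [disjoint T i & T j]) -> x \in L v ->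
  exists i, x \in T i.
Proof.
move=> Hk HT Hd xL.
have Hf : forall i, exists y, T i :&: L v = [set y] by move=> i; apply: trans_elem.
have [f Hfi] := fin_all_exists Hf.
have Hfm : forall i, f i \in T i /\ f i \in L v.
  by move=> i; move: (set11 (f i)); rewrite -Hfi inE => /andP.
have finj : injective f.
  move=> i j fij; apply/eqP; apply/negPn/negP => nij.
  have H1 : f i \in T i :&: L v by rewrite Hfi set11.
  have H2 : f j \in T j :&: L v by rewrite Hfi set11.
  move: H1 H2; rewrite !inE -fij => /andP [H1 _] /andP [H2 _].
  by rewrite (disjointFr (Hd _ _ nij) H1) in H2.
have sub : [set f i | i in 'I_k] \subset L v.
  apply/subsetP => y /imsetP [i _ ->].
  exact: (Hfm i).2.
have : [set f i | i in 'I_k] = L v.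
  apply/eqP; rewrite eqEcard sub /= card_imset // card_ord Hk //.
move=> Heq; move: xL; rewrite -Heq => /imsetP [i _ ->]; exists i.
exact: (Hfm i).1.
Qed.

Lemma no_trans_no_pack k v x :
  k_fold L k -> x \in L v ->
  (forall I, indep_transversal h L I -> x \notin I) -> ~ has_packing h L k.
Proof.
move=> Hk xL Hno [T [HT Hd]].
have [i xi] := packing_covers (Hk v) HT Hd xL.
by move: (Hno _ (HT i)); rewrite xi.
Qed.

Local Open Scope ring_scope.
Lemma no_trans_no_frac v x :
  x \in L v ->
  (forall I, indep_transversal h L I -> x \notin I) -> ~ has_fractional_packing h L.
Proof.
move=> xL Hno [p [_ Hp0 _ Hm]].
have Hs : \sum_(I : {set C} | x \in I) p I = 0.
  apply: big1 => I xI; apply: Hp0; apply/negP => /Hno; by rewrite xI.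
have : (0 < #|L v|)%N by apply/card_gt0P; exists x.
move: (Hm v x xL); rewrite Hs => /esym /eqP; rewrite invr_eq0 pnatr_eq0 => /eqP H.
by rewrite H.
Qed.

End Cover.

Fixpoint allseq (n m : nat) : seq (seq nat) :=
  if n is n'.+1 then [seq x :: l | x <- iota 0 m, l <- allseq n' m] else [:: [::]].

Definition perms (n : nat) := filter uniq (allseq n n).

Definition pinjc n (xs : seq nat) :=
  all (fun i => all (fun j => (i == j) || (n <= nth 0 xs i) || (nth 0 xs i != nth 0 xs j))
    (iota 0 n)) (iota 0 n).
Definition monoc n (xs : seq nat) :=
  all (fun i => all (fun j => (j <= i) || (n <= nth 0 xs i) || (n <= nth 0 xs j) || (nth 0 xs i < nth 0 xs j))
    (iota 0 n)) (iota 0 n).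
Definition goodc n (s xs ys : seq nat) :=
  all (fun i => (nth 0 s i != nth 0 xs i) && (nth 0 s i != nth 0 ys i)) (iota 0 n).
Definition extc n (s xs : seq nat) :=
  all (fun i => (n <= nth 0 xs i) || (nth 0 s i == nth 0 xs i)) (iota 0 n).

Definition check_avoid n :=
  let ps := perms n in let cs := allseq n n.+1 in
  let vs := filter (pinjc n) cs in
  all (fun xs => all (fun ys => has (fun s => goodc n s xs ys) ps) vs) vs.
Definition check_mono n :=
  let ps := perms n in let cs := allseq n n.+1 in
  all (fun xs => ~~ monoc n xs || all (fun ys => ~~ monoc n ys || has (fun s => goodc n s xs ys) ps) cs) cs.
Definition check_ext n :=
  let ps := perms n in let cs := allseq n n.+1 in
  all (fun xs => ~~ pinjc n xs || has (fun s => extc n s xs) ps) cs.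

Lemma chk4 : check_avoid 4. Proof. vm_compute. reflexivity. Qed.
Lemma chk3 : check_mono 3. Proof. vm_compute. reflexivity. Qed.
Lemma chke3 : check_ext 3. Proof. vm_compute. reflexivity. Qed.

Lemma mem_allseq n m l : (l \in allseq n m) = (size l == n) && all (fun x => x < m) l.
Proof.
elim: n l => [|n IH] [|x l] //=.
- by apply/negP => /allpairsPdep [x' [l' [_ _ E]]].
apply/idP/idP.
  case/allpairsPdep => [x' [l' [Hx Hl [E1 E2]]]]; subst x' l'.
  by move: Hx Hl; rewrite mem_iota IH /= add0n => Hx /andP [Hs Ha]; rewrite eqSS Hs Hx Ha.
rewrite eqSS => /and3P [Hs Hx Hl]; apply/allpairsPdep.
by exists x, l; rewrite mem_iota IH Hs Hl Hx.
Qed.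

Definition code n (o : option 'I_n) := if o is Some x then val x else n.
Definition enc n (b : 'I_n.+1 -> option 'I_n.+1) : seq nat :=
  mkseq (fun i => code (b (inord i))) n.+1.
Definition pinj n (b : 'I_n -> option 'I_n) := forall i j x, b i = Some x -> b j = Some x -> i = j.

Lemma nth_enc n (b : 'I_n.+1 -> option 'I_n.+1) (i : 'I_n.+1) : nth 0 (enc b) i = code (b i).
Proof. by rewrite nth_mkseq // inord_val. Qed.

Lemma code_le n (o : option 'I_n) : code o <= n.
Proof. by case: o => [x|] //=; apply: ltnW. Qed.

Lemma code_lt n (o : option 'I_n) : (code o < n) = (o != None).
Proof. by case: o => [x|] //=; rewrite ?ltn_ord ?ltnn. Qed.

Lemma code_inj n (o1 o2 : option 'I_n) : code o1 < n -> code o1 = code o2 -> o1 = o2.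
Proof.
case: o1 => [x|]; case: o2 => [y|] //=; rewrite ?ltnn //.
- by move=> _ /val_inj ->.
- by move=> _ E; move: (ltn_ord x); rewrite E ltnn.
Qed.

Lemma enc_mem n (b : 'I_n.+1 -> option 'I_n.+1) : enc b \in allseq n.+1 n.+2.
Proof.
rewrite mem_allseq size_mkseq eqxx andTb; apply/allP => x /mapP [i _ ->].
by rewrite ltnS code_le.
Qed.

Lemma enc_pinj n (b : 'I_n.+1 -> option 'I_n.+1) : pinj b -> pinjc n.+1 (enc b).
Proof.
move=> Hb; apply/allP => i; rewrite mem_iota add0n => Hi; apply/allP => j; rewrite mem_iota add0n => Hj.
have -> : i = Ordinal Hi by []. have -> : j = Ordinal Hj by [].
rewrite !nth_enc; case: eqP => //= Hne.
rewrite leqNgt code_lt; case Hbi : (b (Ordinal Hi)) => [x|] //=.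
apply/negP => /eqP E.
have := code_inj (o1 := b (Ordinal Hi)) (o2 := b (Ordinal Hj)); rewrite Hbi /= => /(_ (ltn_ord x) E) H.
by apply: Hne; have := Hb _ _ x Hbi (esym H) => /(f_equal val).
Qed.

Lemma perm_mem n s : s \in perms n -> [/\ uniq s, size s = n & all (fun x => x < n) s].
Proof. by rewrite mem_filter mem_allseq => /andP [-> /andP [/eqP -> ->]]. Qed.

Lemma perm_fun n s : s \in perms n.+1 ->
  exists sg : 'I_n.+1 -> 'I_n.+1, injective sg /\ forall i : 'I_n.+1, val (sg i) = nth 0 s i.
Proof.
move=> /perm_mem [Hu Hs Ha].
have Hlt : forall i : 'I_n.+1, nth 0 s i < n.+1.
  by move=> i; apply: (allP Ha); apply: mem_nth; rewrite Hs.
exists (fun i => inord (nth 0 s i)); split; last by move=> i /=; rewrite inordK.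
move=> i j /(f_equal val) /=; rewrite !inordK // => E.
by apply/val_inj; apply/eqP; rewrite -(nth_uniq 0 _ _ Hu) ?Hs ?ltn_ord // E.
Qed.

Lemma goodc_sound n s (b1 b2 : 'I_n.+1 -> option 'I_n.+1) (sg : 'I_n.+1 -> 'I_n.+1) :
  (forall i : 'I_n.+1, val (sg i) = nth 0 s i) -> goodc n.+1 s (enc b1) (enc b2) ->
  forall i, b1 i != Some (sg i) /\ b2 i != Some (sg i).
Proof.
move=> Hsg /allP Hg i; have := Hg i; rewrite mem_iota add0n ltn_ord => /(_ isT).
rewrite !nth_enc -Hsg => /andP [H1 H2]; split; apply/eqP => E.
  by move: H1; rewrite E eqxx.
by move: H2; rewrite E eqxx.
Qed.

Lemma avoid_sound n : check_avoid n.+1 -> forall b1 b2 : 'I_n.+1 -> option 'I_n.+1,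
  pinj b1 -> pinj b2 -> exists sg : 'I_n.+1 -> 'I_n.+1,
  injective sg /\ forall i, b1 i != Some (sg i) /\ b2 i != Some (sg i).
Proof.
move=> /allP Hc b1 b2 H1 H2.
have m1 : enc b1 \in filter (pinjc n.+1) (allseq n.+1 n.+2) by rewrite mem_filter enc_pinj // enc_mem.
have m2 : enc b2 \in filter (pinjc n.+1) (allseq n.+1 n.+2) by rewrite mem_filter enc_pinj // enc_mem.
have /hasP [s Hs Hgood] := allP (Hc _ m1) _ m2.
have [sg [Hinj Hv]] := perm_fun Hs.
by exists sg; split => //; apply: goodc_sound Hgood.
Qed.

Definition monob n (b : 'I_n -> option 'I_n) :=
  forall (i j : 'I_n) x y, i < j -> b i = Some x -> b j = Some y -> x < y.

Lemma enc_mono n (b : 'I_n.+1 -> option 'I_n.+1) : monob b -> monoc n.+1 (enc b).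
Proof.
move=> Hb; apply/allP => i; rewrite mem_iota add0n => Hi; apply/allP => j; rewrite mem_iota add0n => Hj.
have -> : i = Ordinal Hi by []. have -> : j = Ordinal Hj by [].
rewrite !nth_enc; case: (leqP (Ordinal Hj) (Ordinal Hi)) => //= Hij.
case Hbi : (b (Ordinal Hi)) => [x|] /=; last by rewrite ?leqnn ?orbT.
case Hbj : (b (Ordinal Hj)) => [y|] /=; last by rewrite ?leqnn ?orbT.
by rewrite (Hb (Ordinal Hi) (Ordinal Hj) _ _ Hij Hbi Hbj) !orbT.
Qed.

Lemma mono_sound n : check_mono n.+1 -> forall b1 b2 : 'I_n.+1 -> option 'I_n.+1,
  monob b1 -> monob b2 -> exists sg : 'I_n.+1 -> 'I_n.+1,
  injective sg /\ forall i, b1 i != Some (sg i) /\ b2 i != Some (sg i).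
Proof.
move=> /allP Hc b1 b2 H1 H2.
have := Hc _ (enc_mem b1); rewrite enc_mono //= => /allP /(_ _ (enc_mem b2)).
rewrite enc_mono //= => /hasP [s Hs Hgood].
have [sg [Hinj Hv]] := perm_fun Hs.
by exists sg; split => //; apply: goodc_sound Hgood.
Qed.

Lemma ext_sound n : check_ext n.+1 -> forall b : 'I_n.+1 -> option 'I_n.+1,
  pinj b -> exists sg : 'I_n.+1 -> 'I_n.+1,
  injective sg /\ forall i x, b i = Some x -> sg i = x.
Proof.
move=> /allP Hc b H.
have := Hc _ (enc_mem b); rewrite enc_pinj //= => /hasP [s Hs Hext].
have [sg [Hinj Hv]] := perm_fun Hs.
exists sg; split => // i x Hbi; apply/val_inj.
move/allP: Hext => /(_ i); rewrite mem_iota add0n ltn_ord nth_enc Hbi /= leqNgt ltn_ord /= -Hv.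
by move=> /(_ isT) /eqP.
Qed.

Lemma avoid4 : forall b1 b2 : 'I_4 -> option 'I_4,
  pinj b1 -> pinj b2 -> exists sg : 'I_4 -> 'I_4,
  injective sg /\ forall i, b1 i != Some (sg i) /\ b2 i != Some (sg i).
Proof. exact: (avoid_sound chk4). Qed.
Lemma avoid3mono : forall b1 b2 : 'I_3 -> option 'I_3,
  monob b1 -> monob b2 -> exists sg : 'I_3 -> 'I_3,
  injective sg /\ forall i, b1 i != Some (sg i) /\ b2 i != Some (sg i).
Proof. exact: (mono_sound chk3). Qed.
Lemma ext3 : forall b : 'I_3 -> option 'I_3,
  pinj b -> exists sg : 'I_3 -> 'I_3,
  injective sg /\ forall i x, b i = Some x -> sg i = x.
Proof. exact: (ext_sound chke3). Qed.

Lemma enum_bij (C : finType) (A : {set C}) k : #|A| = k ->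
  exists f : 'I_k -> C, [/\ injective f, forall i, f i \in A & forall x, x \in A -> exists i, f i = x].
Proof.
move=> Hk; subst k; exists (fun i => enum_val i); split.
- exact: enum_val_inj.
- move=> i; exact: enum_valP.
- by move=> x xA; exists (enum_rank_in xA x); rewrite enum_rankK_in.
Qed.

Lemma sorted_bij N (A : {set 'I_N}) k : #|A| = k.+1 ->
  exists f : 'I_k.+1 -> 'I_N, [/\ forall i j : 'I_k.+1, i < j -> f i < f j,
     forall i, f i \in A & forall x, x \in A -> exists i, f i = x].
Proof.
move=> Hk; have : (0 < #|A|)%N by rewrite Hk.
case/card_gt0P => x0 x0A.
have Hs : size (enum A) = k.+1 by rewrite -cardE.
have inc_A : sorted ltn (map val (enum A)).
  rewrite -[enum _](eq_filter (mem_enum _)).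
  rewrite -(eq_filter (mem_map val_inj _)) -filter_map.
  by rewrite (sorted_filter ltn_trans) // unlock val_ord_enum iota_ltn_sorted.
exists (fun i => nth x0 (enum A) i); split.
- move=> i j ij; rewrite -!(nth_map x0 (val x0)) ?Hs //.
  by apply: (sorted_ltn_nth ltn_trans) => //; rewrite inE size_map Hs.
- by move=> i; rewrite -mem_enum mem_nth // Hs.
- move=> x xA; have xe : x \in enum A by rewrite mem_enum.
  have Hi : index x (enum A) < k.+1 by rewrite -Hs index_mem.
  by exists (Ordinal Hi); rewrite /= nth_index.
Qed.

Section ListCover.
Variables (V : finType) (g : rel V) (N : nat) (Lst : V -> {set 'I_N}).

Lemma lc_eq (c1 c2 : lc_vert Lst) : (val c1).1 = (val c2).1 -> (val c1).2 = (val c2).2 -> c1 = c2.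
Proof. by move=> H1 H2; apply/val_inj; move: H1 H2; case: (val c1) => ? ?; case: (val c2) => ? ? /= -> ->. Qed.

Lemma lc_cover : simple_graph g -> is_cover g (lc_rel g Lst) (lc_L Lst).
Proof.
case=> Hs Hi; split.
- split.
  + move=> a b; rewrite /lc_rel eq_sym; congr (_ && _).
    by rewrite (eq_sym (val a).1) (eq_sym (val a).2) Hs.
  + by move=> a; rewrite /lc_rel eqxx.
- move=> c; apply/eqP/cards1P; exists (val c).1; apply/setP => v.
  by rewrite !inE eq_sym.
- move=> v x y; rewrite !inE /lc_rel => /eqP -> /eqP -> nxy.
  by rewrite eqxx orTb andbT; apply: contra nxy => /eqP /val_inj ->.
- move=> u v x y nuv nguv; rewrite !inE /lc_rel => /eqP -> /eqP ->.
  by rewrite (negbTE nuv) (negbTE nguv) andbF.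
- move=> u v x y1 y2 guv; rewrite !inE /lc_rel => /eqP Hx /eqP Hy1 /eqP Hy2.
  rewrite Hx Hy1 Hy2 => /andP [_ /orP [/eqP E|/andP [_ /eqP E1]]].
    by rewrite E Hi in guv.
  move=> /andP [_ /orP [/eqP E|/andP [_ /eqP E2]]]; first by rewrite E Hi in guv.
  by apply: lc_eq; rewrite ?Hy1 ?Hy2 // -E1 -E2.
Qed.

Lemma lc_kfold k : (forall v, #|Lst v| = k) -> k_fold (lc_L Lst) k.
Proof.
move=> Hk v; rewrite -(Hk v).
have -> : Lst v = [set (val c).2 | c in lc_L Lst v].
  apply/setP => x; apply/idP/imsetP => [xL|[c]]; last first.
    by rewrite inE => /eqP Hc ->; have := valP c; rewrite Hc.
  have P : (v, x).2 \in Lst (v, x).1 by [].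
  by exists (Sub (v, x) P); rewrite ?inE SubK.
rewrite card_in_imset // => c1 c2; rewrite !inE => /eqP H1 /eqP H2 E.
by apply: lc_eq; rewrite ?H1 ?H2.
Qed.

End ListCover.

Section Subdiv.
Variables (V0 : finType) (e0 : rel V0).
Hypothesis He : simple_graph e0.
Local Notation E := (subdiv_edge e0).
Local Notation V := (subdiv_vert e0).
Local Notation G := (subdiv_rel e0).

Lemma G_simple : simple_graph G.
Proof. by split; [case=> [a|s] [b|t] | case]. Qed.

Lemma ends_ex (s : E) : exists uv : V0 * V0, (uv.1 != uv.2) /\ val s = [set uv.1; uv.2].
Proof.
case: s => S /= /existsP [u /existsP [v /andP [Huv /eqP ->]]].
exists (u, v); split => //=; apply/eqP => Euv; rewrite Euv in Huv.
by case: He => _ Hi; rewrite Hi in Huv.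
Qed.

Lemma subdiv_packing k (C : finType) (h : rel C) (L : V -> {set C}) :
  is_cover G h L ->
  forall (l : V0 -> 'I_k -> C) (e : E -> 'I_k -> C),
  (forall a i, l a i \in L (inl a)) -> (forall a, injective (l a)) ->
  (forall (s : E) i, e s i \in L (inr s)) -> (forall s : E, injective (e s)) ->
  (forall (s : E) i a, a \in val s -> ~~ h (l a i) (e s i)) -> has_packing h L k.
Proof.
move=> Hc l e Hl Hli Hel Hei Hb.
apply: (choice_packing Hc (phi := fun i v => match v with inl a => l a i | inr s => e s i end)).
- by move=> i [a|s].
- move=> i [a|s] [b|t] //= H; first exact: Hb.
  by rewrite (cover_sym Hc); apply: Hb.
- by move=> i j [a|s] /=; [apply: Hli | apply: Hei].
Qed.

Lemma block_spec k (C : finType) (h : rel C) (L : V -> {set C}) :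
  is_cover G h L -> forall (l f : 'I_k -> C) (a : V0) (s : E),
  a \in val s -> injective l -> injective f -> (forall i, l i \in L (inl a)) ->
  (forall j, f j \in L (inr s)) ->
  pinj (fun i => [pick j | h (l i) (f j)]) /\
  (forall i j, h (l i) (f j) -> [pick j | h (l i) (f j)] = Some j) /\
  (forall i j, [pick j | h (l i) (f j)] = Some j -> h (l i) (f j)).
Proof.
move=> Hc l f a s As li fi Hl Hf.
case: (Hc) => _ _ _ _ Hm.
split; last split.
- move=> i i' j; case: pickP => // j1 H1 [E1]; case: pickP => // j2 H2 [E2].
  subst j1 j2; apply: li; apply: (Hm (inr s) (inl a) (f j)) => //.
  by rewrite (cover_sym Hc). by rewrite (cover_sym Hc).
- move=> i j Hij; case: pickP => [j' Hj'|/(_ j)]; last by rewrite Hij.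
  congr Some; apply: fi; exact: (Hm (inl a) (inr s) (l i)).
- by move=> i j; case: pickP => // j' H [<-].
Qed.

Lemma corr4 : corr_packing_prop G 4.
Proof.
move=> C h L Hc Hk.
have [l Hl] := fin_all_exists (fun a => enum_bij (Hk (inl a))).
have [f Hf] := fin_all_exists (fun s => enum_bij (Hk (inr s))).
have [en Hen] := fin_all_exists ends_ex.
have li a : injective (l a) by case: (Hl a).
have lL a i : l a i \in L (inl a) by case: (Hl a).
have fi s : injective (f s) by case: (Hf s).
have fL s i : f s i \in L (inr s) by case: (Hf s).
have Hsig : forall s : E, exists sg : 'I_4 -> 'I_4,
    injective sg /\ forall i a, a \in val s -> ~~ h (l a i) (f s (sg i)).
  move=> s; have [Hn Hv] := Hen s.
  have Hb a (As : a \in val s) := block_spec Hc As (li a) (fi s) (lL a) (fL s).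
  have A1 : (en s).1 \in val s by rewrite Hv !inE eqxx.
  have A2 : (en s).2 \in val s by rewrite Hv !inE eqxx orbT.
  have [sg [Hsi Hsa]] := avoid4 (Hb _ A1).1 (Hb _ A2).1.
  exists sg; split => // i a; rewrite Hv !inE => /orP [] /eqP ->; apply/negP => H.
    by move: (Hsa i).1; rewrite ((Hb _ A1).2.1 _ _ H) eqxx.
  by move: (Hsa i).2; rewrite ((Hb _ A2).2.1 _ _ H) eqxx.
have [sg Hsg] := fin_all_exists Hsig.
apply: (subdiv_packing Hc (l := l) (e := fun s i => f s (sg s i))).
- exact: lL.
- exact: li.
- by move=> s i; apply: fL.
- by move=> s i j /(fi s) /(proj1 (Hsg s)).
- by move=> s i a As; apply: (proj2 (Hsg s)).
Qed.

Lemma inc_rev k N (f : 'I_k -> 'I_N) : (forall i j : 'I_k, i < j -> f i < f j) ->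
  forall i j : 'I_k, f i < f j -> i < j.
Proof.
move=> Hf i j H; case: (ltngtP i j) => // [ji|/val_inj eij].
  by have := Hf _ _ ji; rewrite ltnNge (ltnW H).
by rewrite eij ltnn in H.
Qed.

Lemma inc_inj k N (f : 'I_k -> 'I_N) : (forall i j : 'I_k, i < j -> f i < f j) -> injective f.
Proof.
move=> Hf i j E; apply/val_inj; case: (ltngtP i j) => // H; have := Hf _ _ H; by rewrite E ltnn.
Qed.

Lemma list3 : list_packing_prop G 3.
Proof.
move=> N Lst Hk.
have Hc := lc_cover Lst G_simple.
have [col Hcol] := fin_all_exists (fun v => sorted_bij (Hk v)).
have colL v i : col v i \in Lst v by case: (Hcol v).
have colinc v : forall i j : 'I_3, i < j -> col v i < col v j by case: (Hcol v).
pose mk v i : lc_vert Lst := Sub (v, col v i) (colL v i).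
have mki v : injective (mk v).
  move=> i j /(f_equal (fun c => (val c).2)) /= E; exact: (inc_inj (colinc v) E).
have mkL v i : mk v i \in lc_L Lst v by rewrite inE ?SubK.
have mkh a (s : E) i j : a \in val s ->
    lc_rel G Lst (mk (inl a) i) (mk (inr s) j) = (col (inl a) i == col (inr s) j).
  by move=> As; rewrite /lc_rel ?SubK /= As.
have [en Hen] := fin_all_exists ends_ex.
have Hsig : forall s : E, exists sg : 'I_3 -> 'I_3,
    injective sg /\ forall i a, a \in val s -> ~~ lc_rel G Lst (mk (inl a) i) (mk (inr s) (sg i)).
  move=> s; have [Hn Hv] := Hen s.
  have Hb a (As : a \in val s) := block_spec Hc As (mki (inl a)) (mki (inr s)) (mkL (inl a)) (mkL (inr s)).
  have Hmono a (As : a \in val s) : monob (fun i => [pick j | lc_rel G Lst (mk (inl a) i) (mk (inr s) j)]).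
    move=> i j x y ij /(Hb _ As).2.2 Hx /(Hb _ As).2.2 Hy.
    move: Hx Hy; rewrite !mkh // => /eqP Hx /eqP Hy.
    by apply: (inc_rev (colinc (inr s))); rewrite -Hx -Hy; apply: colinc.
  have A1 : (en s).1 \in val s by rewrite Hv !inE eqxx.
  have A2 : (en s).2 \in val s by rewrite Hv !inE eqxx orbT.
  have [sg [Hsi Hsa]] := avoid3mono (Hmono _ A1) (Hmono _ A2).
  exists sg; split => // i a; rewrite Hv !inE => /orP [] /eqP ->; apply/negP => H.
    by move: (Hsa i).1; rewrite ((Hb _ A1).2.1 _ _ H) eqxx.
  by move: (Hsa i).2; rewrite ((Hb _ A2).2.1 _ _ H) eqxx.
have [sg Hsg] := fin_all_exists Hsig.
apply: (subdiv_packing Hc (l := fun a => mk (inl a)) (e := fun s i => mk (inr s) (sg s i))).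
- by move=> a i; apply: mkL.
- by move=> a; apply: mki.
- by move=> s i; apply: mkL.
- by move=> s i j /(mki _) /(proj1 (Hsg s)).
- by move=> s i a As; apply: (proj2 (Hsg s)).
Qed.

Lemma list_le_corr : chi_leq (list_frac_prop G) (corr_frac_prop G).
Proof.
move=> k k0 Hk; exists k; split => // N Lst HL.
apply: Hk; [exact: lc_cover G_simple | exact: lc_kfold].
Qed.

End Subdiv.

Local Open Scope ring_scope.

Notation RR := Rdefinitions.R.

Definition W (y1 y2 j : 'I_3) : RR :=
  if y1 == y2 then (if j == y1 then 0 else 2^-1)
  else (if (j == y1) || (j == y2) then 0 else 1).

Definition o0 : 'I_3 := @Ordinal 3 0 isT.
Definition o1 : 'I_3 := @Ordinal 3 1 isT.
Definition o2 : 'I_3 := @Ordinal 3 2 isT.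

Lemma sum3 (F : 'I_3 -> RR) : \sum_j F j = F o0 + F o1 + F o2.
Proof.
rewrite !big_ord_recr big_ord0 /=.
have E : forall (x : RR), 0 + x = x by move=> x; rewrite add0r.
rewrite E; congr (_ + _ + _); congr F; exact/val_inj.
Qed.

Lemma W_ge0 y1 y2 j : 0 <= W y1 y2 j.
Proof. rewrite /W; by repeat case: ifP => _ //; rewrite invr_ge0 ler0n. Qed.

Lemma ord3_cases (y : 'I_3) : [\/ y = o0, y = o1 | y = o2].
Proof.
case: y => [[|[|[|n]]] H]; [constructor 1|constructor 2|constructor 3|by []];
  exact/val_inj.
Qed.

Lemma W_sum y1 y2 : \sum_j W y1 y2 j = 1.
Proof.
rewrite sum3 /W.
by case: (ord3_cases y1) => ->; case: (ord3_cases y2) => ->; rewrite /=; field.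
Qed.

Lemma W_marg j : \sum_y1 \sum_y2 W y1 y2 j = 3%:R.
Proof.
rewrite sum3 !sum3 /W.
by case: (ord3_cases j) => ->; rewrite /=; field.
Qed.

Lemma W_zero y1 y2 j : W y1 y2 j = 0 -> (j == y1) || (j == y2).
Proof.
rewrite /W; case: eqP => [->|_]; case: ifP => // _ /eqP; rewrite ?orbb ?invr_eq0 ?oner_eq0 //.
by rewrite pnatr_eq0.
Qed.


Definition c3 : RR := 3%:R^-1.
Lemma c3_ge0 : 0 <= c3. Proof. by rewrite /c3 invr_ge0 ler0n. Qed.
Lemma sum_c3 : \sum_(j : 'I_3) c3 = 1.
Proof. rewrite sumr_const card_ord /c3 -mulr_natl; by field. Qed.

Lemma sum_sel (T : finType) (P : pred T) (t : T) (x : RR) :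
  \sum_(I | P I) (if t == I then x else 0) = if P t then x else 0.
Proof.
case Pt: (P t).
  rewrite (bigD1 t) //= eqxx big1 ?addr0 // => I /andP [_ nI].
  by rewrite eq_sym (negbTE nI).
by rewrite big1 // => I PI; case: eqP => // E; rewrite E PI in Pt.
Qed.

Lemma sum_selT (T : finType) (t : T) (x : RR) :
  \sum_I (if t == I then x else 0) = x.
Proof. exact: (sum_sel predT). Qed.

Lemma sum_selF (T : finType) (t : T) (F : T -> RR) :
  \sum_I (if t == I then F I else 0) = F t.
Proof.
rewrite (bigD1 t) //= eqxx big1 ?addr0 // => I; rewrite eq_sym => /negbTE ->.
by [].
Qed.

Lemma sum_ffun (I : finType) (F : I -> 'I_3 -> RR) :
  \sum_(a : {ffun I -> 'I_3}) \prod_i F i (a i) = \prod_i \sum_j F i j.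
Proof. by rewrite bigA_distr_bigA. Qed.

Lemma pin_gen (I : finType) (pin : I -> option 'I_3) (F : I -> 'I_3 -> RR) :
  (forall x, pin x = None -> \sum_j F x j = 1) ->
  \sum_(a : {ffun I -> 'I_3})
     (if [forall x, (pin x == None) || (pin x == Some (a x))] then \prod_x F x (a x) else 0)
  = \prod_x (if pin x is Some j then F x j else 1).
Proof.
move=> HF.
pose H x j := if pin x is Some j' then (if j == j' then F x j else 0) else F x j.
transitivity (\sum_(a : {ffun I -> 'I_3}) \prod_x H x (a x)).
  apply: eq_bigr => a _; case: (boolP [forall x, _]) => [/forallP Hall|/forallPn [x Hx]].
    apply: eq_bigr => x _; rewrite /H; move: (Hall x).
    by case: (pin x) => [j|] //= /eqP [Ej]; rewrite Ej eqxx.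
  rewrite (bigD1 x) //= /H; move: Hx; case: (pin x) => // j /=.
  move=> Hne; have -> : (a x == j) = false by apply/negP => /eqP E; rewrite E eqxx in Hne.
  by rewrite mul0r.
rewrite sum_ffun; apply: eq_bigr => x _; rewrite /H.
case Ep: (pin x) => [j|]; last exact: HF.
rewrite (bigD1 j) //= eqxx big1 ?addr0 // => i /negbTE -> //.
Qed.

Lemma pin1_gen (I : finType) (F : I -> 'I_3 -> RR) (a : I) (j0 : 'I_3) :
  (forall b, b != a -> \sum_j F b j = 1) ->
  \sum_(al : {ffun I -> 'I_3}) (if al a == j0 then \prod_b F b (al b) else 0) = F a j0.
Proof.
move=> HF.
have E : \prod_x (if (if x == a then Some j0 else None) is Some j then F x j else 1) = F a j0.
  rewrite (bigD1 a) //= eqxx big1 ?mulr1 // => b /negbTE ->.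
  by [].
rewrite -E -(pin_gen (pin := fun b => if b == a then Some j0 else None) (F := F)); last first.
  by move=> x; case: (x =P a) => // /eqP nx _; apply: HF.
apply: eq_bigr => al _; congr (if _ then _ else _).
apply/eqP/forallP => [Ea x|/(_ a)]; last by rewrite eqxx /= => /eqP [->].
by case: ifP => [/eqP ->|_]; rewrite ?Ea ?eqxx ?orbT.
Qed.

Lemma pin2_gen (I : finType) (F : I -> 'I_3 -> RR) (a b : I) (ja jb : 'I_3) :
  a != b -> (forall x, x != a -> x != b -> \sum_j F x j = 1) ->
  \sum_(al : {ffun I -> 'I_3}) (if (al a == ja) && (al b == jb) then \prod_x F x (al x) else 0)
  = F a ja * F b jb.
Proof.
move=> nab HF.
pose pin x := if x == a then Some ja else if x == b then Some jb else None.
have E : \prod_x (if pin x is Some j then F x j else 1) = F a ja * F b jb.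
  rewrite (bigD1 a) //= /pin eqxx (bigD1 b) 1?eq_sym //= eqxx (negbTE nab).
  rewrite big1 ?mulr1 // => x /andP [/negbTE -> /negbTE ->] //.
rewrite -E -(pin_gen (pin := pin) (F := F)); last first.
  by move=> x; rewrite /pin; case: (x =P a) => // /eqP nxa; case: (x =P b) => // /eqP nxb _; apply: HF.
apply: eq_bigr => al _; congr (if _ then _ else _).
apply/andP/forallP => [[/eqP Ea /eqP Eb] x|H].
  by rewrite /pin; case: ifP => [/eqP ->|_]; rewrite ?Ea ?eqxx ?orbT //; case: ifP => [/eqP ->|_]; rewrite ?Eb ?eqxx ?orbT.
move: (H a) (H b); rewrite /pin eqxx (eq_sym b a) (negbTE nab) eqxx /=.
by move=> /eqP [->] /eqP [->].
Qed.

Lemma sum_const_prod (I : finType) : \sum_(al : {ffun I -> 'I_3}) \prod_(a : I) c3 = 1.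
Proof. by rewrite (sum_ffun (fun _ _ => c3)) big1 // => a _; apply: sum_c3. Qed.

Lemma expand2 (a1 a2 : 'I_3) (F : 'I_3 -> 'I_3 -> RR) :
  F a1 a2 = \sum_i1 \sum_i2 (if (a1 == i1) && (a2 == i2) then F i1 i2 else 0).
Proof.
transitivity (\sum_(i1 : 'I_3) (if a1 == i1 then \sum_(i2 : 'I_3) (if a2 == i2 then F a1 i2 else 0) else 0)).
  by rewrite (sum_selT a1) (sum_selF a2 (F a1)).
apply: eq_bigr => i1 _; case: eqP => [<-|_] /=; last by rewrite big1.
by [].
Qed.

Lemma sum_sum_sel (A B T : finType) (P : pred T) (tr : A -> B -> T) (w : A -> B -> RR) :
  \sum_(I | P I) \sum_a \sum_b (if tr a b == I then w a b else 0) =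
  \sum_a \sum_b (if P (tr a b) then w a b else 0).
Proof.
rewrite exchange_big; apply: eq_bigr => a _; rewrite exchange_big.
by apply: eq_bigr => b _; rewrite sum_sel.
Qed.

Section Frac.
Variables (V0 : finType) (e0 : rel V0) (C : finType) (h : rel C)
  (L : subdiv_vert e0 -> {set C}).
Local Notation E := (subdiv_edge e0).
Local Notation V := (subdiv_vert e0).
Local Notation G := (subdiv_rel e0).
Hypothesis Hc : is_cover G h L.
Hypothesis Hk : k_fold L 3.
Variables (l : V0 -> 'I_3 -> C) (f : E -> 'I_3 -> C) (u v : E -> V0) (ps1 ps2 : E -> 'I_3 -> 'I_3).
Hypotheses (li : forall a, injective (l a)) (lL : forall a i, l a i \in L (inl a))
  (lS : forall a x, x \in L (inl a) -> exists i, l a i = x)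
  (fi : forall s, injective (f s)) (fL : forall s i, f s i \in L (inr s))
  (fS : forall s x, x \in L (inr s) -> exists i, f s i = x)
  (uv : forall s, u s != v s) (inS : forall (s : E) a, (a \in val s) = (a == u s) || (a == v s))
  (ps1i : forall s : E, injective (ps1 s)) (ps2i : forall s : E, injective (ps2 s))
  (Hps1 : forall (s : E) i j, h (l (u s) i) (f s j) -> j = ps1 s i)
  (Hps2 : forall (s : E) i j, h (l (v s) i) (f s j) -> j = ps2 s i).

Definition Qw s (al : {ffun V0 -> 'I_3}) j := W (ps1 s (al (u s))) (ps2 s (al (v s))) j.
Definition ww al (be : {ffun E -> 'I_3}) := \prod_(a : V0) c3 * \prod_(s : E) Qw s al (be s).
Definition phiw (al : {ffun V0 -> 'I_3}) (be : {ffun E -> 'I_3}) (x : V) : C :=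
  match x with inl a => l a (al a) | inr s => f s (be s) end.
Definition Trw al be := [set phiw al be x | x : V].
Definition pw (I : {set C}) := \sum_(al : {ffun V0 -> 'I_3}) \sum_(be : {ffun E -> 'I_3})
  (if Trw al be == I then ww al be else 0).

Lemma ww_ge0 al be : 0 <= ww al be.
Proof.
apply: mulr_ge0; apply: prodr_ge0 => ? _; [exact: c3_ge0 | exact: W_ge0].
Qed.

Lemma ww_trans al be : ww al be != 0 -> indep_transversal h L (Trw al be).
Proof.
move=> Hw.
have HQ : forall s, ~~ ((be s == ps1 s (al (u s))) || (be s == ps2 s (al (v s)))).
  move=> s; apply/negP => /orP H; move: Hw; rewrite /ww mulf_eq0 negb_or => /andP [_].
  move/prodf_neq0 => /(_ s isT); apply/negP; rewrite negbK; apply/eqP.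
  rewrite /Qw /W; case: eqP => [E|_].
    by case: H => /eqP ->; rewrite ?E eqxx.
  by case: H => /eqP ->; rewrite eqxx ?orbT.
have Hind : forall (s : E) a, a \in val s -> ~~ h (l a (al a)) (f s (be s)).
  move=> s a; rewrite inS => /orP [] /eqP -> ; apply/negP => Hh; move: (HQ s).
    by rewrite (Hps1 Hh) eqxx.
  by rewrite (Hps2 Hh) eqxx orbT.
apply: (choice_trans Hc).
- by case=> [a|s] /=.
- case=> [a|s] [b|t] //= H; first exact: Hind.
  by rewrite (cover_sym Hc); apply: Hind.
Qed.

Lemma sum_beta al : \sum_(be : {ffun E -> 'I_3}) \prod_s Qw s al (be s) = 1.
Proof. by rewrite (sum_ffun (fun s j => Qw s al j)) big1 // => s _; rewrite /Qw W_sum. Qed.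

Lemma sum_ww al : \sum_be ww al be = \prod_(a : V0) c3.
Proof. by rewrite /ww -big_distrr /= sum_beta mulr1. Qed.

Lemma mem_Tr_l a i0 al be : (l a i0 \in Trw al be) = (al a == i0).
Proof.
apply/imsetP/eqP => [[[b|s] _ /= E]|<-]; last by exists (inl a).
  have Eab := cover_part Hc (lL a i0) (etrans (f_equal (fun z => z \in L (inl b)) E) (lL b _)).
  by case: Eab => Eab; subst b; exact: (li (esym E)).
by have := cover_part Hc (lL a i0) (etrans (f_equal (fun z => z \in L (inr s)) E) (fL s _)).
Qed.

Lemma mem_Tr_f s j0 al be : (f s j0 \in Trw al be) = (be s == j0).
Proof.
apply/imsetP/eqP => [[[b|t] _ /= E]|<-]; last by exists (inr s).
  by have := cover_part Hc (fL s j0) (etrans (f_equal (fun z => z \in L (inl b)) E) (lL b _)).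
have Est := cover_part Hc (fL s j0) (etrans (f_equal (fun z => z \in L (inr t)) E) (fL t _)).
by case: Est => Est; subst t; exact: (fi (esym E)).
Qed.

Lemma frac_packing : has_fractional_packing h L.
Proof.
exists pw; split.
- by move=> I; apply: sumr_ge0 => al _; apply: sumr_ge0 => be _; case: ifP => // _; apply: ww_ge0.
- move=> I HI; apply: big1 => al _; apply: big1 => be _; case: eqP => // E.
  apply/eqP; apply/negP => /negP Hw; move: HI; rewrite -E; by rewrite ww_trans.
- rewrite /pw (sum_sum_sel predT) /=.
  by rewrite (eq_bigr (fun al => \prod_(a : V0) c3)) ?sum_const_prod // => al _; apply: sum_ww.
move=> w x xL; rewrite /pw (sum_sum_sel (fun I : {set C} => x \in I)) Hk.
case: w xL => [a|s] xL.
  have [i0 <-] := lS xL.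
  under eq_bigr => al _ do under eq_bigr => be _ do rewrite mem_Tr_l.
  transitivity (\sum_(al : {ffun V0 -> 'I_3}) (if al a == i0 then \prod_(b : V0) (fun _ _ => c3) b (al b) else 0)).
    apply: eq_bigr => al _; case: ifP => _; first exact: sum_ww.
    by apply: big1.
  by rewrite (pin1_gen (F := fun _ _ => c3)) // => b _; apply: sum_c3.
have [j0 <-] := fS xL.
under eq_bigr => al _ do under eq_bigr => be _ do rewrite mem_Tr_f.
transitivity (\sum_(al : {ffun V0 -> 'I_3}) \prod_(b : V0) c3 * Qw s al j0).
  apply: eq_bigr => al _; rewrite -(pin1_gen (F := fun t j => Qw t al j)); last first.
    by move=> t _; rewrite /Qw W_sum.
  rewrite big_distrr; apply: eq_bigr => be _ /=; case: ifP => _ //; by rewrite mulr0.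
transitivity (\sum_(al : {ffun V0 -> 'I_3}) \sum_i1 \sum_i2
   (if (al (u s) == i1) && (al (v s) == i2) then \prod_(b : V0) c3 else 0) *
      W (ps1 s i1) (ps2 s i2) j0).
  apply: eq_bigr => al _; rewrite /Qw (expand2 (al (u s)) (al (v s)) (fun i1 i2 => W (ps1 s i1) (ps2 s i2) j0)).
  rewrite big_distrr; apply: eq_bigr => i1 _; rewrite big_distrr; apply: eq_bigr => i2 _ /=.
  by case: ifP => _; rewrite ?mulr0 ?mul0r.
rewrite exchange_big; under eq_bigr => i1 _ do rewrite exchange_big.
transitivity (\sum_i1 \sum_i2 c3 * c3 * W (ps1 s i1) (ps2 s i2) j0).
  apply: eq_bigr => i1 _; apply: eq_bigr => i2 _; rewrite -big_distrl /=.
  by rewrite (pin2_gen (F := fun _ _ => c3)) // => b _ _; apply: sum_c3.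
under eq_bigr => i1 _ do rewrite -big_distrr /=.
rewrite -big_distrr /=.
have -> : \sum_i1 \sum_i2 W (ps1 s i1) (ps2 s i2) j0 = 3%:R.
  rewrite -(W_marg j0) [RHS](reindex_inj (@ps1i s)); apply: eq_bigr => i1 _.
  by rewrite [RHS](reindex_inj (@ps2i s)).
rewrite /c3; by field.
Qed.

End Frac.

Lemma corr3frac (V0 : finType) (e0 : rel V0) : simple_graph e0 ->
  corr_frac_prop (subdiv_rel e0) 3.
Proof.
move=> He C h L Hc Hk.
have [l Hl] := fin_all_exists (fun a => enum_bij (Hk (inl a))).
have [f Hf] := fin_all_exists (fun s => enum_bij (Hk (inr s))).
have [en Hen] := fin_all_exists (ends_ex He).
have li a : injective (l a) by case: (Hl a).
have lL a i : l a i \in L (inl a) by case: (Hl a).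
have lS a x : x \in L (inl a) -> exists i, l a i = x by case: (Hl a) => _ _; apply.
have fi s : injective (f s) by case: (Hf s).
have fL s i : f s i \in L (inr s) by case: (Hf s).
have fS s x : x \in L (inr s) -> exists i, f s i = x by case: (Hf s) => _ _; apply.
have uv s : (en s).1 != (en s).2 by case: (Hen s).
have inS (s : subdiv_edge e0) a : (a \in val s) = (a == (en s).1) || (a == (en s).2).
  by case: (Hen s) => _ ->; rewrite !inE.
have Hps : forall (s : subdiv_edge e0) (a : V0), a \in val s -> exists ps : 'I_3 -> 'I_3,
    injective ps /\ forall i j, h (l a i) (f s j) -> j = ps i.
  move=> s a As.
  have [Hp [Hb _]] := block_spec Hc As (li a) (fi s) (lL a) (fL s).
  have [sg [Hsi Hsx]] := ext3 Hp.
  by exists sg; split => // i j /Hb /Hsx ->.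
have A1 s : (en s).1 \in val s by rewrite inS eqxx.
have A2 s : (en s).2 \in val s by rewrite inS eqxx orbT.
have [ps1 Hps1] := fin_all_exists (fun s => Hps s _ (A1 s)).
have [ps2 Hps2] := fin_all_exists (fun s => Hps s _ (A2 s)).
apply: (@frac_packing _ _ _ _ _ Hc Hk l f (fun s => (en s).1) (fun s => (en s).2) ps1 ps2) => //.
- by move=> s; case: (Hps1 s).
- by move=> s; case: (Hps2 s).
- by move=> s i j; case: (Hps1 s) => _; apply.
- by move=> s i j; case: (Hps2 s) => _; apply.
Qed.

Local Close Scope ring_scope.

Lemma cyc3_simple : simple_graph (cycle_rel 3).
Proof.
split.
- move=> i j; rewrite /cycle_rel; by rewrite orbC.
- by move=> i; rewrite /cycle_rel; case: (ord3_cases i) => ->.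
Qed.

Notation G3 := (subdiv_rel (cycle_rel 3)).
Notation E3 := (subdiv_edge (cycle_rel 3)).

Lemma e01P : [exists u, exists v, cycle_rel 3 u v && ([set o0; o1] == [set u; v])].
Proof. by apply/existsP; exists o0; apply/existsP; exists o1; rewrite eqxx. Qed.
Lemma e12P : [exists u, exists v, cycle_rel 3 u v && ([set o1; o2] == [set u; v])].
Proof. by apply/existsP; exists o1; apply/existsP; exists o2; rewrite eqxx. Qed.
Lemma e02P : [exists u, exists v, cycle_rel 3 u v && ([set o0; o2] == [set u; v])].
Proof. by apply/existsP; exists o2; apply/existsP; exists o0; rewrite setUC eqxx. Qed.

Definition e01 : E3 := exist _ [set o0; o1] e01P.
Definition e12 : E3 := exist _ [set o1; o2] e12P.
Definition e02 : E3 := exist _ [set o0; o2] e02P.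

Lemma adj01a : G3 (inl o0) (inr e01). Proof. by rewrite /= !inE eqxx. Qed.
Lemma adj01b : G3 (inl o1) (inr e01). Proof. by rewrite /= !inE eqxx orbT. Qed.
Lemma adj12a : G3 (inl o1) (inr e12). Proof. by rewrite /= !inE eqxx. Qed.
Lemma adj12b : G3 (inl o2) (inr e12). Proof. by rewrite /= !inE eqxx orbT. Qed.
Lemma adj02a : G3 (inl o2) (inr e02). Proof. by rewrite /= !inE eqxx orbT. Qed.
Lemma adj02b : G3 (inl o0) (inr e02). Proof. by rewrite /= !inE eqxx. Qed.

Section LcTrans.
Variables (V : finType) (g : rel V) (N : nat) (Lst : V -> {set 'I_N}).
Hypothesis Hg : simple_graph g.

Lemma lc_pick I w : indep_transversal (lc_rel g Lst) (lc_L Lst) I ->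
  exists d, d \in I /\ (val d).1 = w.
Proof.
move=> HI; have [d Hd] := trans_elem w HI.
have : d \in I :&: lc_L Lst w by rewrite Hd set11.
by rewrite !inE => /andP [dI /eqP dw]; exists d.
Qed.

Lemma lc_noconf I c d : indep_transversal (lc_rel g Lst) (lc_L Lst) I ->
  c \in I -> d \in I -> g (val c).1 (val d).1 -> (val c).2 != (val d).2.
Proof.
case/andP => /forallP /(_ c) /implyP Hind _ cI dI gcd; apply/negP => /eqP E.
move: (Hind cI) => /forallP /(_ d) /implyP /(_ dI); rewrite /lc_rel E eqxx gcd orbT andbT.
rewrite negbK => /eqP Ecd; case: Hg => _ Hi; by rewrite Ecd Hi in gcd.
Qed.

Lemma lc_step I c w a b : indep_transversal (lc_rel g Lst) (lc_L Lst) I ->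
  c \in I -> g (val c).1 w -> Lst w = [set a; b] -> (val c).2 = a ->
  exists d, [/\ d \in I, (val d).1 = w & (val d).2 = b].
Proof.
move=> HI cI gcw Lw ca; have [d [dI dw]] := lc_pick w HI.
exists d; split => //.
have := valP d; rewrite dw Lw !inE => /orP [/eqP da|/eqP //].
have := lc_noconf HI cI dI; rewrite dw ca da eqxx => /(_ gcw).
by [].
Qed.

End LcTrans.

Lemma corr_to_list_frac (V : finType) (g : rel V) k : simple_graph g ->
  corr_frac_prop g k -> list_frac_prop g k.
Proof. move=> Hg Hk N Lst HL; apply: Hk; [exact: lc_cover | exact: lc_kfold]. Qed.

Lemma corr_to_list_pack (V : finType) (g : rel V) k : simple_graph g ->
  corr_packing_prop g k -> list_packing_prop g k.
Proof. move=> Hg Hk N Lst HL; apply: Hk; [exact: lc_cover | exact: lc_kfold]. Qed.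

Definition k7 (n : nat) (H : n < 7) : 'I_7 := Ordinal H.

Definition Lst2 (v : subdiv_vert (cycle_rel 3)) : {set 'I_7} :=
  match v with
  | inl a => if a == o0 then [set k7 (isT : 1 < 7); k7 (isT : 2 < 7)]
             else if a == o1 then [set k7 (isT : 3 < 7); k7 (isT : 4 < 7)]
             else [set k7 (isT : 5 < 7); k7 (isT : 6 < 7)]
  | inr s => if o2 \notin val s then [set k7 (isT : 1 < 7); k7 (isT : 3 < 7)]
             else if o0 \notin val s then [set k7 (isT : 4 < 7); k7 (isT : 5 < 7)]
             else [set k7 (isT : 6 < 7); k7 (isT : 1 < 7)]
  end.

Lemma Lst2_card v : #|Lst2 v| = 2.
Proof. by case: v => [a|s] /=; repeat case: ifP => _; rewrite cards2. Qed.

Definition vo0 : subdiv_vert (cycle_rel 3) := inl o0.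
Lemma x2P : (vo0, k7 (isT : 1 < 7)).2 \in Lst2 (vo0, k7 (isT : 1 < 7)).1.
Proof. by rewrite /= !inE eqxx. Qed.
Definition x2 : lc_vert Lst2 := Sub (vo0, k7 (isT : 1 < 7)) x2P.

Lemma L2_01 : Lst2 (inr e01) = [set k7 (isT : 1 < 7); k7 (isT : 3 < 7)].
Proof. by rewrite /Lst2 /= !inE. Qed.
Lemma L2_12 : Lst2 (inr e12) = [set k7 (isT : 4 < 7); k7 (isT : 5 < 7)].
Proof. by rewrite /Lst2 /= !inE. Qed.
Lemma L2_02 : Lst2 (inr e02) = [set k7 (isT : 6 < 7); k7 (isT : 1 < 7)].
Proof. by rewrite /Lst2 /= !inE. Qed.
Lemma L2_1 : Lst2 (inl o1) = [set k7 (isT : 3 < 7); k7 (isT : 4 < 7)].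
Proof. by []. Qed.
Lemma L2_2 : Lst2 (inl o2) = [set k7 (isT : 5 < 7); k7 (isT : 6 < 7)].
Proof. by []. Qed.

Lemma Lst2_notrans (I : {set lc_vert Lst2}) :
  indep_transversal (lc_rel G3 Lst2) (lc_L Lst2) I -> x2 \notin I.
Proof.
move=> HI; apply/negP => xI.
have Hg := G_simple (cycle_rel 3).
have [d1 [d1I d1w d1c]] := lc_step Hg HI xI adj01a L2_01 (erefl _).
have g1 : G3 (val d1).1 (inl o1) by rewrite d1w; exact: adj01b.
have [d2 [d2I d2w d2c]] := lc_step Hg HI d1I (w := inl o1) g1 L2_1 d1c.
have g2 : G3 (val d2).1 (inr e12) by rewrite d2w; exact: adj12a.
have [d3 [d3I d3w d3c]] := lc_step Hg HI d2I (w := inr e12) g2 L2_12 d2c.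
have g3 : G3 (val d3).1 (inl o2) by rewrite d3w; exact: adj12b.
have [d4 [d4I d4w d4c]] := lc_step Hg HI d3I (w := inl o2) g3 L2_2 d3c.
have g4 : G3 (val d4).1 (inr e02) by rewrite d4w; exact: adj02a.
have [d5 [d5I d5w d5c]] := lc_step Hg HI d4I (w := inr e02) g4 L2_02 d4c.
have := lc_noconf Hg HI xI d5I; rewrite d5w d5c.
by move=> /(_ adj02b); rewrite eqxx.
Qed.

Definition Lst1 (v : subdiv_vert (cycle_rel 3)) : {set 'I_1} := [set ord0].
Lemma x1P : (vo0, (ord0 : 'I_1)).2 \in Lst1 (vo0, (ord0 : 'I_1)).1.
Proof. by rewrite /Lst1 inE. Qed.
Definition x1 : lc_vert Lst1 := Sub (vo0, ord0) x1P.

Lemma Lst1_notrans (I : {set lc_vert Lst1}) :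
  indep_transversal (lc_rel G3 Lst1) (lc_L Lst1) I -> x1 \notin I.
Proof.
move=> HI; apply/negP => xI.
have Hg := G_simple (cycle_rel 3).
have [d [dI dw]] := lc_pick (inr e01) HI.
have g1 : G3 (val x1).1 (val d).1 by rewrite dw; exact: adj01a.
have := lc_noconf Hg HI xI dI g1.
by case: ((val x1).2) => [[|//] ?]; case: ((val d).2) => [[|//] ?].
Qed.

Lemma no_lf1 : ~ list_frac_prop G3 1.
Proof.
move=> H; have := H 1 Lst1 (fun v => cards1 _).
apply: (no_trans_no_frac (v := vo0) (x := x1)).
  by rewrite inE.
exact: Lst1_notrans.
Qed.

Lemma no_lp1 : ~ list_packing_prop G3 1.
Proof.
move=> H; have := H 1 Lst1 (fun v => cards1 _).
apply: (no_trans_no_pack (v := vo0) (x := x1)).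
- exact: lc_kfold (fun v => cards1 _).
- by rewrite inE.
- exact: Lst1_notrans.
Qed.

Lemma no_lf2 : ~ list_frac_prop G3 2.
Proof.
move=> H; have := H 7 Lst2 Lst2_card.
apply: (no_trans_no_frac (v := vo0) (x := x2)).
  by rewrite inE.
exact: Lst2_notrans.
Qed.

Lemma no_lp2 : ~ list_packing_prop G3 2.
Proof.
move=> H; have := H 7 Lst2 Lst2_card.
apply: (no_trans_no_pack (v := vo0) (x := x2)).
- exact: lc_kfold Lst2_card.
- by rewrite inE.
- exact: Lst2_notrans.
Qed.

Definition cycok (a b c d e f : seq nat) :=
  all (fun i => [&& nth 0 a i != nth 0 b i, nth 0 b i != nth 0 c i, nth 0 c i != nth 0 d i,
     nth 0 d i != nth 0 e i, nth 0 e i != nth 0 f i & (nth 0 a i + nth 0 f i) %% 3 != 0]) (iota 0 3).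
Definition check_cyc :=
  let ps := perms 3 in
  all (fun a => all (fun b => all (fun c => all (fun d => all (fun e => all (fun f =>
    ~~ cycok a b c d e f) ps) ps) ps) ps) ps) ps.
Lemma check_cyc_ok : check_cyc. Proof. vm_compute. reflexivity. Qed.

Definition enc3 (fw : 'I_3 -> 'I_3) := enc (fun i => Some (fw i)).

Lemma enc3_perm fw : injective fw -> enc3 fw \in perms 3.
Proof.
move=> fi; rewrite mem_filter; apply/andP; split.
  rewrite /enc3 /enc /mkseq map_inj_in_uniq ?iota_uniq //.
  move=> i j; rewrite !mem_iota /= => Hi Hj /= E.
  have : fw (inord i) = fw (inord j) by apply/val_inj.
  move/fi/(f_equal val) => /=; by rewrite !inordK.
rewrite mem_allseq size_mkseq eqxx andTb; apply/allP => x /mapP [i _ ->] /=.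
exact: ltn_ord.
Qed.

Lemma nth_enc3 fw (i : 'I_3) : nth 0 (enc3 fw) i = val (fw i).
Proof. by rewrite /enc3 nth_enc. Qed.

Lemma cyc_contra (a b c d e f : 'I_3 -> 'I_3) :
  injective a -> injective b -> injective c -> injective d -> injective e -> injective f ->
  (forall i, [&& a i != b i, b i != c i, c i != d i, d i != e i, e i != f i &
     (val (a i) + val (f i)) %% 3 != 0]) -> False.
Proof.
move=> ai bi ci di ei fi H.
have := check_cyc_ok; rewrite /check_cyc.
move=> /allP /(_ _ (enc3_perm ai)) /allP /(_ _ (enc3_perm bi)) /allP /(_ _ (enc3_perm ci)).
move=> /allP /(_ _ (enc3_perm di)) /allP /(_ _ (enc3_perm ei)) /allP /(_ _ (enc3_perm fi)).
apply/negP; rewrite negbK; apply/allP => i; rewrite mem_iota add0n => Hi.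
have -> : i = Ordinal Hi by [].
rewrite !nth_enc3; move: (H (Ordinal Hi)).
by rewrite !(inj_eq val_inj).
Qed.

Definition V3 := subdiv_vert (cycle_rel 3).
Definition C3 : finType := (V3 * 'I_3)%type.
Definition twp (v w : V3) : bool :=
  ((v == inl o0) && (w == inr e02)) || ((w == inl o0) && (v == inr e02)).
Definition tw (x y : C3) : bool :=
  if twp x.1 y.1 then (val x.2 + val y.2) %% 3 == 0 else x.2 == y.2.
Definition hT (x y : C3) : bool := (x != y) && ((x.1 == y.1) || (G3 x.1 y.1 && tw x y)).
Definition LT (v : V3) : {set C3} := [set x : C3 | x.1 == v].

Lemma tw_sym x y : tw x y = tw y x.
Proof.
rewrite /tw; have -> : twp y.1 x.1 = twp x.1 y.1 by rewrite /twp orbC.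
by case: ifP => _; [rewrite addnC | rewrite eq_sym].
Qed.

Lemma LT_cover : is_cover G3 hT LT.
Proof.
have [Gs Gi] := G_simple (cycle_rel 3).
split.
- split.
  + move=> x y; rewrite /hT eq_sym (eq_sym x.1) Gs tw_sym //.
  + by move=> x; rewrite /hT eqxx.
- move=> x; apply/eqP/cards1P; exists x.1; apply/setP => v; by rewrite !inE eq_sym.
- move=> v x y; rewrite !inE /hT => /eqP -> /eqP -> ->; by rewrite eqxx.
- move=> u v x y nuv nguv; rewrite !inE /hT => /eqP -> /eqP ->.
  by rewrite (negbTE nuv) (negbTE nguv) andbF.
- move=> u v x y1 y2 guv; rewrite !inE /hT => /eqP Hx /eqP H1 /eqP H2.
  rewrite Hx H1 H2 /tw Hx H1 H2.
  have nuv : u != v by apply/eqP => E; rewrite E Gi in guv.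
  rewrite (negbTE nuv) guv /= => /andP [_ T1] /andP [_ T2].
  case: y1 H1 T1 => v1 c1 /= ->; case: y2 H2 T2 => v2 c2 /= ->.
  case: ifP => _.
    move=> /eqP T1 /eqP T2; congr (_, _); apply/val_inj => /=.
    move: (ltn_ord c1) (ltn_ord c2) (ltn_ord x.2) T1 T2.
    move: (nat_of_ord c1) (nat_of_ord c2) (nat_of_ord x.2) => n1 n2 n3.
    by case: n1 => [|[|[|?]]] //; case: n2 => [|[|[|?]]] //; case: n3 => [|[|[|?]]].
  by move=> /eqP <- /eqP <-.
Qed.

Lemma LT_kfold : k_fold LT 3.
Proof.
move=> v; have -> : LT v = [set (v, i) | i : 'I_3].
  apply/setP => x; rewrite inE; apply/eqP/imsetP => [<-|[i _ ->] //].
  by exists x.2 => //; case: x.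
rewrite card_imset ?card_ord // => i j [].
by [].
Qed.

Lemma tw_fun (T : 'I_3 -> {set C3}) :
  (forall i, indep_transversal hT LT (T i)) -> (forall i j, i != j -> [disjoint T i & T j]) ->
  forall w : V3, exists fw : 'I_3 -> 'I_3, injective fw /\ forall i, (w, fw i) \in T i.
Proof.
move=> HT Hd w.
have [y Hy] := fin_all_exists (fun i => trans_elem w (HT i)).
have Hy2 i : y i \in T i /\ (y i).1 = w.
  by move: (set11 (y i)); rewrite -Hy !inE => /andP [-> /eqP ->].
exists (fun i => (y i).2); split.
  move=> i j E; apply/eqP; apply/negP => /negP nij.
  have Eij : y i = y j by move: (Hy2 i) (Hy2 j) E; case: (y i) => ? ?; case: (y j) => ? ? /= [_ ->] [_ ->] ->.
  by have := disjointFr (Hd _ _ nij) (Hy2 i).1; rewrite Eij (Hy2 j).1.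
by move=> i; case: (Hy2 i) => H1 H2; move: H1; case: (y i) H2 => ? ? /= ->.
Qed.

Lemma tw_cons (T : 'I_3 -> {set C3}) :
  (forall i, indep_transversal hT LT (T i)) ->
  forall (w w' : V3) (fw fw' : 'I_3 -> 'I_3), G3 w w' ->
  (forall i, (w, fw i) \in T i) -> (forall i, (w', fw' i) \in T i) ->
  forall i, ~~ tw (w, fw i) (w', fw' i).
Proof.
move=> HT w w' fw fw' gw Hw Hw' i.
have [_ Gi] := G_simple (cycle_rel 3).
have nww : w != w' by apply/eqP => E; rewrite E Gi in gw.
case/andP: (HT i) => /forallP /(_ (w, fw i)) /implyP /(_ (Hw i)) /forallP /(_ (w', fw' i)).
move=> /implyP /(_ (Hw' i)); rewrite /hT /= (negbTE nww) gw /=.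
have -> : (w, fw i) != (w', fw' i) by apply/negP => /eqP [E _]; rewrite E eqxx in nww.
by [].
Qed.

Lemma ne0102 : (e01 == e02) = false.
Proof.
apply/negP => /eqP E; have := f_equal (fun s : E3 => o1 \in val s) E.
by rewrite /= !inE.
Qed.
Lemma ne1202 : (e12 == e02) = false.
Proof.
apply/negP => /eqP E; have := f_equal (fun s : E3 => o1 \in val s) E.
by rewrite /= !inE.
Qed.

Lemma neV01 : (inr e01 == inr e02 :> V3) = false.
Proof. apply/negP => /eqP [E]; have E' : e01 = e02 by apply: val_inj. by move: ne0102; rewrite E' eqxx. Qed.
Lemma neV12 : (inr e12 == inr e02 :> V3) = false.
Proof. apply/negP => /eqP [E]; have E' : e12 = e02 by apply: val_inj. by move: ne1202; rewrite E' eqxx. Qed.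

Lemma no_cp3 : ~ corr_packing_prop G3 3.
Proof.
move=> H; have [T [HT Hd]] := H _ _ _ LT_cover LT_kfold.
have [fa [ai Ha]] := tw_fun HT Hd (inl o0).
have [fb [bi Hb]] := tw_fun HT Hd (inr e01).
have [fc [ci Hc]] := tw_fun HT Hd (inl o1).
have [fd [di Hd']] := tw_fun HT Hd (inr e12).
have [fe [ei He]] := tw_fun HT Hd (inl o2).
have [ff [fi Hf]] := tw_fun HT Hd (inr e02).
apply: (cyc_contra ai bi ci di ei fi) => i.
have := tw_cons HT adj01a Ha Hb i; rewrite /tw /twp /= ?neV01 /= => ->.
have := tw_cons HT adj01b Hc Hb i; rewrite /tw /twp /= ?neV01 /= eq_sym => ->.
have := tw_cons HT adj12a Hc Hd' i; rewrite /tw /twp /= ?neV12 /= => ->.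
have := tw_cons HT adj12b He Hd' i; rewrite /tw /twp /= ?neV12 /= eq_sym => ->.
have := tw_cons HT adj02a He Hf i; rewrite /tw /twp /= => ->.
have := tw_cons HT adj02b Ha Hf i; rewrite /tw /twp /= !eqxx /= => ->.
by [].
Qed.

Theorem mainTheorem13 :
  (forall (V0 : finType) (e0 : rel V0), simple_graph e0 ->
     let G := subdiv_rel e0 in
     [/\ chi_leq (list_frac_prop G) (corr_frac_prop G),
         chi_le (corr_frac_prop G) 3,
         chi_le (corr_packing_prop G) 4
       & chi_le (list_packing_prop G) 3]) /\
  [/\ (exists n, (3 <= n)%N /\ chi_eq (list_frac_prop (subdiv_rel (cycle_rel n))) 3),
      (exists n, (3 <= n)%N /\ chi_eq (corr_frac_prop (subdiv_rel (cycle_rel n))) 3),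
      (exists n, (3 <= n)%N /\ chi_eq (corr_packing_prop (subdiv_rel (cycle_rel n))) 4)
    & (exists n, (3 <= n)%N /\ chi_eq (list_packing_prop (subdiv_rel (cycle_rel n))) 3)].
Proof.
have Hs := cyc3_simple.
have Gs := G_simple (cycle_rel 3).
split.
  move=> V0 e0 He G; split.
  - exact: list_le_corr.
  - by exists 3; split => //; exact: corr3frac.
  - by exists 4; split => //; exact: corr4.
  - by exists 3; split => //; exact: list3.
split; [exists 3 | exists 3 | exists 3 | exists 3]; split => //; split.
- exact: (@list_le_corr _ (cycle_rel 3) 3 isT (corr3frac Hs)).
- move=> [k [k0 k2 Hk]]; case: k k0 k2 Hk => [|[|[|k]]] //= _ _.
  + exact: no_lf1.
  + exact: no_lf2.
- by exists 3; split => //; exact: corr3frac.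
- move=> [k [k0 k2 Hk]]; case: k k0 k2 Hk => [|[|[|k]]] //= _ _ /(corr_to_list_frac Gs).
  + exact: no_lf1.
  + exact: no_lf2.
- by exists 4; split => //; exact: corr4.
- move=> [k [k0 k2 Hk]]; case: k k0 k2 Hk => [|[|[|[|k]]]] //= _ _.
  + by move/(corr_to_list_pack Gs); exact: no_lp1.
  + by move/(corr_to_list_pack Gs); exact: no_lp2.
  + exact: no_cp3.
- by exists 3; split => //; exact: list3.
- move=> [k [k0 k2 Hk]]; case: k k0 k2 Hk => [|[|[|k]]] //= _ _.
  + exact: no_lp1.
  + exact: no_lp2.
Qed.
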